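(* If $G$ is a diamond-weakly modular graph, then $G$ is weakly modular, and whenever $G$ contains an induced subgraph isomorphic to $C_5$, to $W_4^-$, or to the house, there exists a vertex of $G$ adjacent to all five vertices of that induced subgraph.
   Context: All graphs are finite, simple and connected; $d$ is the shortest-path distance. $C_5$ is the 5-cycle; $W_4$ is the 4-wheel (a 4-cycle plus a central vertex adjacent to all cycle vertices) and $W_4^-$ is $W_4$ with one edge between the center and a cycle vertex removed; the house is the 5-cycle with one chord (a 4-cycle with a triangle glued on one edge). Triangle condition $(TC)$: for any three vertices $u,v,w$ with $1=d(v,w)<d(v,u)=d(u,w)$ there is a common neighbor $z$ of $v,w$ with $d(u,z)=d(u,v)-1$. Quadrangle condition $(QC)$: for any four vertices $u,v,w,y$ with $d(v,y)=d(w,y)=1$ and $2=d(v,w)\le d(u,v)=d(u,w)=d(u,y)-1$, there exists a common neighbor $z$ of $v$ and $w$ with $d(u,z)=d(u,v)-1$. Weakly modular means $(TC)$ and $(QC)$. Triangle diamond condition $(TDC)$: for any three vertices $u,v,w$ with $1=d(v,w)<d(u,v)=d(u,w)$, there exists a common neighbor $z$ of $v$ and $w$ with $d(u,z)=d(u,v)-1$ such that $z$ is adjacent to every vertex $x$ with $d(x,v)=1$, $d(u,x)=d(u,v)-1$ and to every vertex $y$ with $d(y,w)=1$, $d(u,y)=d(u,w)-1$. Diamond-weakly modular means $(QC)$ and $(TDC)$. *)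

(* Defs.v *)
From mathcomp Require Import all_boot.
Set Implicit Arguments. Unset Strict Implicit. Unset Printing Implicit Defensive.

Definition simple_connected_graph (T : finType) (e : rel T) : Prop :=
  [/\ symmetric e, irreflexive e & forall x y : T, connect e x y].

Fixpoint ball (T : finType) (e : rel T) (n : nat) (x : T) : {set T} :=
  match n with
  | 0 => [set x]
  | n'.+1 => ball e n' x :|: [set z | [exists y in ball e n' x, e y z]]
  end.

(* Shortest-path distance: least n with y in ball n x (for a connected
   graph this n is < #|T|). *)
Definition dist (T : finType) (e : rel T) (x y : T) : nat :=
  find (fun n => y \in ball e n x) (iota 0 #|T|).

Section Conditions.
Variables (T : finType) (e : rel T).
Local Notation d := (dist e).

Definition TC : Prop :=
  forall u v w : T, 1 = d v w -> d v w < d v u -> d v u = d u w ->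
  exists z, [/\ e v z, e w z & d u z = d u v - 1].

Definition QC : Prop :=
  forall u v w y : T, d v y = 1 -> d w y = 1 ->
  2 = d v w -> d v w <= d u v -> d u v = d u w -> d u w = d u y - 1 ->
  exists z, [/\ e v z, e w z & d u z = d u v - 1].

Definition TDC : Prop :=
  forall u v w : T, 1 = d v w -> d v w < d u v -> d u v = d u w ->
  exists z, [/\ e v z, e w z, d u z = d u v - 1,
    (forall x, x != z -> d x v = 1 -> d u x = d u v - 1 -> e z x) &
    (forall y, y != z -> d y w = 1 -> d u y = d u w - 1 -> e z y)].

Definition weakly_modular : Prop := TC /\ QC.
Definition diamond_weakly_modular : Prop := QC /\ TDC.

Definition induced_copy (H : rel 'I_5) (f : 'I_5 -> T) : Prop :=
  injective f /\ forall i j, e (f i) (f j) = H i j.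

End Conditions.

Definition edge_of (E : seq (nat * nat)) : rel 'I_5 :=
  fun i j => ((i : nat, j : nat) \in E) || ((j : nat, i : nat) \in E).

Definition C5 : rel 'I_5 := edge_of [:: (0,1); (1,2); (2,3); (3,4); (4,0)].
(* W4^-: 4-cycle 0-1-2-3-0, center 4 adjacent to 0,1,2 (edge 4-3 removed) *)
Definition W4minus : rel 'I_5 :=
  edge_of [:: (0,1); (1,2); (2,3); (3,0); (4,0); (4,1); (4,2)].
Definition house : rel 'I_5 :=
  edge_of [:: (0,1); (1,2); (2,3); (3,0); (4,0); (4,1)].

(* Main.v *)
Require Import Defs.
From mathcomp Require Import all_boot.
Set Implicit Arguments. Unset Strict Implicit.

Lemma find_iota_eq (P : pred nat) k N :
  P k -> (forall j, j < k -> ~~ P j) -> k < N -> find P (iota 0 N) = k.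
Proof.
move=> Pk Pj kN.
rewrite -(subnKC (ltnW kN)) iotaD find_cat.
have -> : has P (iota 0 k) = false.
  apply/hasPn => j; rewrite mem_iota add0n => /andP[_ jk]; exact: Pj.
rewrite size_iota add0n.
case E: (N - k) => [|m]; first by move: kN; rewrite -subn_gt0 E.
by rewrite /= Pk addn0.
Qed.

Lemma card_ge2 (T : finType) (x y : T) : x != y -> 1 < #|T|.
Proof.
move=> xy; have: uniq [:: x; y] by rewrite /= inE xy.
move/card_uniqP => h; apply: leq_trans (max_card (mem [:: x; y])).
by rewrite h.
Qed.

Lemma card_ge3 (T : finType) (x y z : T) :
  x != y -> x != z -> y != z -> 2 < #|T|.
Proof.
move=> xy xz yz; have: uniq [:: x; y; z] by rewrite /= !inE negb_or xy xz yz.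
move/card_uniqP => h; apply: leq_trans (max_card (mem [:: x; y; z])).
by rewrite h.
Qed.

Lemma ball_S (T : finType) (e : rel T) n x :
  ball e n.+1 x = ball e n x :|: [set z | [exists y in ball e n x, e y z]].
Proof. by []. Qed.

Lemma in_ball0 (T : finType) (e : rel T) x y : (y \in ball e 0 x) = (y == x).
Proof. by rewrite /= inE. Qed.

Lemma in_ball1 (T : finType) (e : rel T) x y :
  (y \in ball e 1 x) = (y == x) || e x y.
Proof.
rewrite ball_S in_setU in_ball0 inE; congr (_ || _).
apply/existsP/idP => [[y0 /andP[]]|h]; first by rewrite in_ball0 => /eqP ->.
by exists x; rewrite in_ball0 eqxx.
Qed.

Lemma in_ball2 (T : finType) (e : rel T) x y :
  (y \in ball e 2 x) = (y \in ball e 1 x) || [exists m in ball e 1 x, e m y].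
Proof. by rewrite ball_S in_setU inE. Qed.

Lemma dist1 (T : finType) (e : rel T) x y :
  irreflexive e -> e x y -> dist e x y = 1.
Proof.
move=> irr exy.
have xy : x != y by apply: contraTneq exy => ->; rewrite irr.
apply: find_iota_eq.
- by rewrite in_ball1 exy orbT.
- by case=> // _; rewrite in_ball0 eq_sym.
- exact: card_ge2 xy.
Qed.

Lemma dist2 (T : finType) (e : rel T) x m y :
  irreflexive e -> x != y -> ~~ e x y -> e x m -> e m y -> dist e x y = 2.
Proof.
move=> irr xy nxy exm emy.
have xm : x != m by apply: contraTneq exm => ->; rewrite irr.
have my : m != y by apply: contraTneq emy => ->; rewrite irr.
apply: find_iota_eq.
- rewrite in_ball2; apply/orP; right; apply/existsP; exists m.
  by rewrite in_ball1 exm orbT emy.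
- case=> [|[|//]] _; first by rewrite in_ball0 eq_sym.
  by rewrite in_ball1 eq_sym (negbTE xy) (negbTE nxy).
- exact: card_ge3 xm xy my.
Qed.

Lemma dist1E (T : finType) (e : rel T) x y : dist e x y = 1 -> e x y.
Proof.
rewrite /dist => h.
case hs: (has (fun n => y \in ball e n x) (iota 0 #|T|)).
- have hl : 1 < #|T| by move: (hs); rewrite has_find h size_iota.
  have := nth_find 0 hs; rewrite h nth_iota //= in_ball1.
  have h0 : 0 < find (fun n => y \in ball e n x) (iota 0 #|T|) by rewrite h.
  have := before_find 0 h0.
  by rewrite nth_iota ?(ltnW hl) //= in_ball0; case: (y == x).
- move: h; rewrite hasNfind ?hs // size_iota => h.
  move/negbT/hasPn: hs => /(_ 0); rewrite mem_iota h in_ball0 => /(_ isT) yx.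
  by move: (card_ge2 yx); rewrite h.
Qed.

Lemma ball_path (T : finType) (e : rel T) n x y :
  y \in ball e n x <-> exists p, [/\ path e x p, last x p = y & size p <= n].
Proof.
elim: n y => [|n IH] y.
- rewrite in_ball0; split => [/eqP ->|[[|a p] [_ <-]]] //; first by exists [::].
- rewrite ball_S in_setU inE; split.
  + case/orP => [/IH [p [pp lp sp]]|/existsP [y0 /andP [/IH [p [pp lp sp]] ey]]].
    * by exists p; split => //; exact: leqW.
    * exists (rcons p y); rewrite rcons_path last_rcons size_rcons pp lp ey.
      by split.
  + case=> p [pp lp sp].
    case: (leqP (size p) n) => hs.
      by apply/orP; left; apply/IH; exists p.
    move: pp lp sp hs; case/lastP: p => [|p z] //.
    rewrite rcons_path last_rcons size_rcons => /andP [pp ez] <- sn ns.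
    apply/orP; right; apply/existsP; exists (last x p); rewrite ez andbT.
    by apply/IH; exists p.
Qed.

Lemma ball_sym (T : finType) (e : rel T) n x y :
  symmetric e -> y \in ball e n x -> x \in ball e n y.
Proof.
move=> sym /ball_path [p [pp lp sp]]; apply/ball_path.
exists (rev (belast x p)); split.
- rewrite -lp rev_path; rewrite (@eq_path _ _ e) // => a b; exact: sym.
- rewrite -lp -(last_cons x) -rev_rcons -lastI rev_cons last_rcons //.
- by rewrite size_rev size_belast.
Qed.

Lemma dist_sym (T : finType) (e : rel T) x y :
  symmetric e -> dist e x y = dist e y x.
Proof.
move=> sym; rewrite /dist; apply: eq_find => n /=.
by apply/idP/idP; apply: ball_sym.
Qed.

Lemma apex (T : finType) (e : rel T) (u v w : T) :
  irreflexive e -> TDC e -> e v w -> dist e u v = 2 -> dist e u w = 2 ->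
  exists z, [/\ e u z, e v z, e w z,
    (forall x, x != z -> e x v -> e u x -> e z x) &
    (forall y, y != z -> e y w -> e u y -> e z y)].
Proof.
move=> irr tdc evw duv duw.
have h1 := esym (dist1 irr evw).
have h2 : dist e v w < dist e u v by rewrite duv -h1.
have h3 : dist e u v = dist e u w by rewrite duv duw.
have [z [evz ewz duz hx hy]] := tdc u v w h1 h2 h3.
exists z; split => //.
- by apply: dist1E; rewrite duz duv.
- move=> x xz exv eux; apply: hx => //; first exact: dist1.
  by rewrite duv (dist1 irr eux).
- move=> x xz exv eux; apply: hy => //; first exact: dist1.
  by rewrite duw (dist1 irr eux).
Qed.

Lemma all5 (P : 'I_5 -> Prop) :
  P (@Ordinal 5 0 isT) -> P (@Ordinal 5 1 isT) -> P (@Ordinal 5 2 isT) ->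
  P (@Ordinal 5 3 isT) -> P (@Ordinal 5 4 isT) -> forall i, P i.
Proof.
move=> P0 P1 P2 P3 P4; case=> [[|[|[|[|[|i]]]]] Hi] //;
  by rewrite (bool_irrelevance Hi isT).
Qed.

Theorem proposition1 (T : finType) (e : rel T) :
  simple_connected_graph e ->
  diamond_weakly_modular e ->
  weakly_modular e /\
  (forall (H : rel 'I_5) (f : 'I_5 -> T),
     (H = C5 \/ H = W4minus \/ H = house) ->
     induced_copy e H f ->
     exists v : T, forall i : 'I_5, e v (f i)).
Proof.
case=> sym irr _ [qc tdc]; split.
  split => //.
  move=> u v w h1 h2 h3.
  have h2' : dist e v w < dist e u v by rewrite (dist_sym u v sym).
  have h3' : dist e u v = dist e u w by rewrite (dist_sym u v sym).
  have [z [? ? ? _ _]] := tdc u v w h1 h2' h3'.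
  by exists z.
set o0 := @Ordinal 5 0 isT; set o1 := @Ordinal 5 1 isT;
set o2 := @Ordinal 5 2 isT; set o3 := @Ordinal 5 3 isT;
set o4 := @Ordinal 5 4 isT.
move=> H f HH [finj Hf].
have ne : forall i j : 'I_5, i != j -> f i != f j by move=> i j; rewrite (inj_eq finj).
case: HH => [E|[E|E]]; subst H.
- have d1 : dist e (f o0) (f o2) = 2.
    by apply: (dist2 (m := f o1)) => //; rewrite ?Hf ?ne.
  have d2 : dist e (f o0) (f o3) = 2.
    by apply: (dist2 (m := f o4)) => //; rewrite ?Hf ?ne.
  have evw : e (f o2) (f o3) by rewrite Hf.
  have [z [euz evz ewz hx hy]] := apex irr tdc evw d1 d2.
  exists z; apply: all5.
  + by rewrite sym.
  + apply: hx; [|by rewrite Hf|by rewrite Hf].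
    by apply/eqP => Ez; move: ewz; rewrite -Ez Hf.
  + by rewrite sym.
  + by rewrite sym.
  + apply: hy; [|by rewrite Hf|by rewrite Hf].
    by apply/eqP => Ez; move: evz; rewrite -Ez Hf.
- have d1 : dist e (f o3) (f o1) = 2.
    by apply: (dist2 (m := f o0)) => //; rewrite ?Hf ?ne.
  have d2 : dist e (f o3) (f o4) = 2.
    by apply: (dist2 (m := f o0)) => //; rewrite ?Hf ?ne.
  have evw : e (f o1) (f o4) by rewrite Hf.
  have [z [euz evz ewz hx hy]] := apex irr tdc evw d1 d2.
  have z0 : f o0 != z.
    apply/eqP => Ez; have := hx (f o2).
    by rewrite -Ez !Hf => /(_ (ne o2 o0 isT) isT isT).
  have z2 : f o2 != z.
    apply/eqP => Ez; have := hx (f o0).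
    by rewrite -Ez !Hf => /(_ (ne o0 o2 isT) isT isT).
  exists z; apply: all5.
  + by apply: hx => //; rewrite Hf.
  + by rewrite sym.
  + by apply: hx => //; rewrite Hf.
  + by rewrite sym.
  + by rewrite sym.
- have d1 : dist e (f o4) (f o2) = 2.
    by apply: (dist2 (m := f o1)) => //; rewrite ?Hf ?ne.
  have d2 : dist e (f o4) (f o3) = 2.
    by apply: (dist2 (m := f o0)) => //; rewrite ?Hf ?ne.
  have evw : e (f o2) (f o3) by rewrite Hf.
  have [z [euz evz ewz hx hy]] := apex irr tdc evw d1 d2.
  exists z; apply: all5.
  + apply: hy; [|by rewrite Hf|by rewrite Hf].
    by apply/eqP => Ez; move: evz; rewrite -Ez Hf.
  + apply: hx; [|by rewrite Hf|by rewrite Hf].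
    by apply/eqP => Ez; move: ewz; rewrite -Ez Hf.
  + by rewrite sym.
  + by rewrite sym.
  + by rewrite sym.
Qed.
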